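(* Let $K>0$ and $0<t\le K/(2C)$. Then the function $F(x)=\Phi^K(-t\log x)$ is convex on $(0,\infty)$; with $F(0):=\Phi^K(+\infty)=\lim_{s\to\infty}\Phi^K(s)$ it is convex and continuous on $[0,\infty)$.
   Context: Let $g:\mathbb R\to\mathbb R$ be an odd bounded $C^3$ function such that $g(x)=x$ on $[-1,1]$, $0<g'(x)\le1$ on $\mathbb R$, and there is a constant $C>0$ with $0\le-g''(x)\le Cg'(x)$ for $x\in[-1,\infty)$. For $K>0$ put $\phi^K(x)=Kg(x/K)$ and $\Phi^K(x)=\int_0^x(\phi^K)'(s)^2\,ds$ (which is bounded and nondecreasing, hence has a finite limit at $+\infty$). *)

(* Defs.v *)
From Stdlib Require Import Reals Lra.
Open Scope R_scope.

Definition tends_to_at_pinfty (f : R -> R) (L : R) : Prop :=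
  forall eps : R, 0 < eps -> exists M : R, forall s : R, M <= s -> Rabs (f s - L) < eps.

Definition convex_on (I : R -> Prop) (f : R -> R) : Prop :=
  forall x y l : R, I x -> I y -> 0 <= l <= 1 ->
    f (l * x + (1 - l) * y) <= l * f x + (1 - l) * f y.

Definition continuous_on (I : R -> Prop) (f : R -> R) : Prop :=
  forall x : R, I x -> forall eps : R, 0 < eps ->
    exists delta : R, 0 < delta /\
      forall y : R, I y -> Rabs (y - x) < delta -> Rabs (f y - f x) < eps.

(* F(x) = Phi(-t log x) for x > 0, extended by F(0) := L (and by L for x <= 0,
   which is irrelevant on [0, infinity)). *)
Definition F_ext (Phi : R -> R) (t L : R) (x : R) : R :=
  if Rle_dec x 0 then L else Phi (- t * ln x).

(* Main.v *)
From Stdlib Require Import Reals Lra.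
From Coquelicot Require Import Coquelicot.
Require Import Defs.
Open Scope R_scope.

Lemma D_comp f g x df dg : derivable_pt_lim f (g x) df -> derivable_pt_lim g x dg ->
  derivable_pt_lim (fun y => f (g y)) x (df * dg).
Proof. intros H1 H2. exact (derivable_pt_lim_comp g f x dg df H2 H1). Qed.

Lemma D_mult f g x a b : derivable_pt_lim f x a -> derivable_pt_lim g x b ->
  derivable_pt_lim (fun y => f y * g y) x (a * g x + f x * b).
Proof. intros H1 H2. exact (derivable_pt_lim_mult f g x a b H1 H2). Qed.

Lemma D_ext f g x l : (forall y, f y = g y) -> derivable_pt_lim f x l -> derivable_pt_lim g x l.
Proof. intros E H. apply is_derive_Reals. apply is_derive_ext with f; auto. now apply is_derive_Reals. Qed.

Lemma D_eq f x l l' : l = l' -> derivable_pt_lim f x l -> derivable_pt_lim f x l'.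
Proof. intros ->; auto. Qed.

Lemma cont_eps f x : continuity_pt f x -> forall eps, 0 < eps ->
  exists d, 0 < d /\ forall y, Rabs (y - x) < d -> Rabs (f y - f x) < eps.
Proof.
  intros Hc eps He. destruct (Hc eps He) as [d [Hd H]]. exists d; split; auto.
  intros y Hy. destruct (Req_dec y x) as [->|Hne].
  - unfold Rminus; rewrite Rplus_opp_r, Rabs_R0; auto.
  - apply (H y). split. split; [exact I| auto]. exact Hy.
Qed.

Lemma D_cont f x l : derivable_pt_lim f x l -> continuity_pt f x.
Proof. intros H. apply derivable_continuous_pt. exists l; exact H. Qed.

Lemma mono_D f f' a b : (forall c, a <= c <= b -> derivable_pt_lim f c (f' c)) ->
  (forall c, a <= c <= b -> 0 <= f' c) -> a <= b -> f a <= f b.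
Proof.
  intros HD Hp Hab. destruct (Req_dec a b) as [->|Hne]; [lra|].
  destruct (MVT_cor2 f f' a b ltac:(lra) HD) as [c [Hc Hc2]].
  assert (0 <= f' c * (b - a)) by (apply Rmult_le_pos; [apply Hp; lra| lra]). lra.
Qed.

Lemma tangent f f' z w : (forall c, 0 < c -> derivable_pt_lim f c (f' c)) ->
  (forall a b, 0 < a <= b -> f' a <= f' b) -> 0 < z -> 0 < w ->
  f z + f' z * (w - z) <= f w.
Proof.
  intros HD Hm Hz Hw. destruct (Rtotal_order z w) as [H|[H|H]].
  - destruct (MVT_cor2 f f' z w H (fun c Hc => HD c ltac:(lra))) as [c [E Hc]].
    assert (f' z <= f' c) by (apply Hm; lra).
    assert (f' z * (w - z) <= f' c * (w - z)) by (apply Rmult_le_compat_r; lra). lra.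
  - subst; lra.
  - destruct (MVT_cor2 f f' w z H (fun c Hc => HD c ltac:(lra))) as [c [E Hc]].
    assert (f' c <= f' z) by (apply Hm; lra).
    assert (f' c * (z - w) <= f' z * (z - w)) by (apply Rmult_le_compat_r; lra). lra.
Qed.

Lemma convex_of_D f f' : (forall c, 0 < c -> derivable_pt_lim f c (f' c)) ->
  (forall a b, 0 < a <= b -> f' a <= f' b) -> convex_on (fun x => 0 < x) f.
Proof.
  intros HD Hm x y l Hx Hy Hl.
  set (z := l * x + (1 - l) * y).
  assert (Hz : 0 < z). { unfold z. destruct (Req_dec l 0) as [->|]. lra.
    assert (0 < l * x) by (apply Rmult_lt_0_compat; lra).
    assert (0 <= (1 - l) * y) by (apply Rmult_le_pos; lra). lra. }
  pose proof (tangent f f' z x HD Hm Hz Hx) as T1.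
  pose proof (tangent f f' z y HD Hm Hz Hy) as T2.
  assert (A1 : 0 <= l * (f x - f z - f' z * (x - z))) by (apply Rmult_le_pos; lra).
  assert (A2 : 0 <= (1 - l) * (f y - f z - f' z * (y - z))) by (apply Rmult_le_pos; lra).
  assert (E : l * (f x - f z - f' z * (x - z)) + (1 - l) * (f y - f z - f' z * (y - z))
     = l * f x + (1 - l) * f y - f z) by (unfold z; ring).
  lra.
Qed.

Lemma convex_closure G : continuous_on (fun x => 0 <= x) G -> convex_on (fun x => 0 < x) G ->
  convex_on (fun x => 0 <= x) G.
Proof.
  intros Hc Hv x y l Hx Hy Hl.
  set (z := l * x + (1 - l) * y).
  assert (Hz : 0 <= z) by (unfold z; assert (0 <= l*x) by (apply Rmult_le_pos; lra); assert (0 <= (1-l)*y) by (apply Rmult_le_pos; lra); lra).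
  destruct (Rle_lt_dec (G z) (l * G x + (1 - l) * G y)) as [ok|bad]; [exact ok|exfalso].
  set (d := (G z - (l * G x + (1 - l) * G y)) / 3).
  assert (Hd : 0 < d) by (unfold d; lra).
  destruct (Hc x Hx d Hd) as [dx [Hdx Px]].
  destruct (Hc y Hy d Hd) as [dy [Hdy Py]].
  destruct (Hc z Hz d Hd) as [dz [Hdz Pz]].
  set (e := Rmin dx (Rmin dy dz) / 2).
  assert (He : 0 < e) by (unfold e; assert (0 < Rmin dx (Rmin dy dz)) by (repeat apply Rmin_pos; lra); lra).
  assert (He1 : e < dx /\ e < dy /\ e < dz).
  { unfold e. pose proof (Rmin_l dx (Rmin dy dz)). pose proof (Rmin_r dx (Rmin dy dz)).
    pose proof (Rmin_l dy dz). pose proof (Rmin_r dy dz). lra. }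
  assert (Ex : Rabs (x + e - x) < dx) by (replace (x + e - x) with e by ring; rewrite Rabs_pos_eq; lra).
  assert (Ey : Rabs (y + e - y) < dy) by (replace (y + e - y) with e by ring; rewrite Rabs_pos_eq; lra).
  assert (Ez : Rabs (z + e - z) < dz) by (replace (z + e - z) with e by ring; rewrite Rabs_pos_eq; lra).
  specialize (Px (x + e) ltac:(lra) Ex). specialize (Py (y + e) ltac:(lra) Ey).
  specialize (Pz (z + e) ltac:(lra) Ez).
  apply Rabs_def2 in Px. apply Rabs_def2 in Py. apply Rabs_def2 in Pz.
  pose proof (Hv (x + e) (y + e) l ltac:(lra) ltac:(lra) Hl) as V.
  replace (l * (x + e) + (1 - l) * (y + e)) with (z + e) in V by (unfold z; ring).
  assert (l * G (x + e) <= l * (G x + d)) by (apply Rmult_le_compat_l; lra).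
  assert ((1 - l) * G (y + e) <= (1 - l) * (G y + d)) by (apply Rmult_le_compat_l; lra).
  unfold d in *. lra.
Qed.
Lemma D_scal f c x l : derivable_pt_lim f x l -> derivable_pt_lim (fun y => c * f y) x (c * l).
Proof. intros H. exact (derivable_pt_lim_scal f c x l H). Qed.

Lemma D_minus f g x a b : derivable_pt_lim f x a -> derivable_pt_lim g x b ->
  derivable_pt_lim (fun y => f y - g y) x (a - b).
Proof. intros H1 H2. exact (derivable_pt_lim_minus f g x a b H1 H2). Qed.

Lemma D_opp x : derivable_pt_lim (fun y => - y) x (-1).
Proof. apply is_derive_Reals. auto_derive; auto; ring. Qed.

Lemma D_div c x : c <> 0 -> derivable_pt_lim (fun y => y / c) x (/ c).
Proof. intros Hc. apply is_derive_Reals. auto_derive; auto. field; auto. Qed.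

Lemma D_sq x : derivable_pt_lim (fun y => y ^ 2) x (2 * x).
Proof. eapply D_eq; [|apply derivable_pt_lim_pow]. simpl; ring. Qed.
Theorem mainTheorem13
  (g g1 g2 g3 : R -> R) (C K t : R)
  (Hg1 : forall x, derivable_pt_lim g x (g1 x))
  (Hg2 : forall x, derivable_pt_lim g1 x (g2 x))
  (Hg3 : forall x, derivable_pt_lim g2 x (g3 x))
  (Hg3c : continuity g3)
  (Hodd : forall x, g (- x) = - g x)
  (Hbdd : exists M, forall x, Rabs (g x) <= M)
  (Hid : forall x, -1 <= x <= 1 -> g x = x)
  (Hg1pos : forall x, 0 < g1 x <= 1)
  (HC : 0 < C)
  (Hg2C : forall x, -1 <= x -> 0 <= - g2 x <= C * g1 x)
  (HK : 0 < K)
  (dphi : R -> R)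
  (Hdphi : forall s, derivable_pt_lim (fun x => K * g (x / K)) s (dphi s))
  (Phi : R -> R)
  (HPhi : forall x, exists pr : Riemann_integrable (fun s => (dphi s) ^ 2) 0 x,
            Phi x = RiemannInt pr)
  (Ht : 0 < t <= K / (2 * C)) :
  convex_on (fun x => 0 < x) (fun x => Phi (- t * ln x)) /\
  exists L : R, tends_to_at_pinfty Phi L /\
    convex_on (fun x => 0 <= x) (F_ext Phi t L) /\
    continuous_on (fun x => 0 <= x) (F_ext Phi t L).
Proof.
  assert (Hev : forall x, g1 (- x) = g1 x).
  { intro x. assert (A : derivable_pt_lim (fun y => g (- y)) x (g1 (- x) * (-1)))
      by (apply D_comp; [apply Hg1 | apply D_opp]).
    assert (B : derivable_pt_lim (fun y => g (- y)) x ((-1) * g1 x)).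
    { apply D_ext with (fun y => (-1) * g y). intro y; rewrite Hodd; ring. apply D_scal, Hg1. }
    pose proof (uniqueness_limite _ _ _ _ A B). lra. }
  assert (Hodd2 : forall x, g2 (- x) = - g2 x).
  { intro x. assert (A : derivable_pt_lim (fun y => g1 (- y)) x (g2 (- x) * (-1)))
      by (apply D_comp; [apply Hg2 | apply D_opp]).
    assert (B : derivable_pt_lim (fun y => g1 (- y)) x (g2 x)).
    { apply D_ext with g1. intro y; rewrite Hev; ring. apply Hg2. }
    pose proof (uniqueness_limite _ _ _ _ A B). lra. }
  assert (HKn : K <> 0) by lra.
  assert (Hdphi' : forall s, dphi s = g1 (s / K)).
  { intro s. assert (A : derivable_pt_lim (fun x => K * g (x / K)) s (K * (g1 (s / K) * / K)))
      by (apply D_scal, D_comp; [apply Hg1 | apply D_div; auto]).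
    pose proof (uniqueness_limite _ _ _ _ (Hdphi s) A). rewrite H. field; auto. }
  pose (h := fun s => g1 (s / K) ^ 2).
  pose (h' := fun s => 2 * g1 (s / K) * (g2 (s / K) * / K)).
  assert (Dh : forall s, derivable_pt_lim h s (h' s)).
  { intro s. unfold h, h'. eapply D_eq; [| apply (D_comp (fun y => y ^ 2) (fun s => g1 (s / K)))].
    2: apply D_sq. 2: apply D_comp; [apply Hg2 | apply D_div; auto]. ring. }
  assert (HPhi2 : forall x, Phi x = RInt h 0 x).
  { intro x. destruct (HPhi x) as [pr E]. rewrite E, <- RInt_Reals.
    apply RInt_ext. intros; unfold h; rewrite Hdphi'; auto. }
  assert (Hhc : forall z, continuous h z).
  { intro z. apply (@ex_derive_continuous R_AbsRing R_NormedModule). exists (h' z). apply is_derive_Reals, Dh. }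
  assert (DPhi : forall x, derivable_pt_lim Phi x (h x)).
  { intro x. apply D_ext with (RInt h 0). intro; rewrite HPhi2; auto.
    apply is_derive_Reals. apply is_derive_RInt with 0.
    apply filter_forall. intro b. apply (@RInt_correct R_CompleteNormedModule), (@ex_RInt_continuous R_CompleteNormedModule). intros; apply Hhc.
    apply Hhc. }
  assert (Htn : t <> 0) by lra.
  pose (k := fun v => h v * exp (v / t)).
  pose (k' := fun v => h' v * exp (v / t) + h v * (exp (v / t) * / t)).
  assert (Dk : forall v, derivable_pt_lim k v (k' v)).
  { intro v. unfold k, k'.
    assert (A : derivable_pt_lim (fun y => exp (y / t)) v (exp (v / t) * / t)).
    { apply (D_comp exp (fun v => v / t)). apply derivable_pt_lim_exp. apply D_div; auto. }
    exact (D_mult h (fun y => exp (y / t)) v _ _ (Dh v) A). }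
  assert (Hk'p : forall v, 0 <= k' v).
  { intro v. unfold k', h, h'. set (y := v / K). set (E := exp (v / t)).
    assert (HE : 0 < E) by apply exp_pos.
    destruct (Hg1pos y) as [Ha1 Ha2]. set (a := g1 y) in *. set (b := g2 y).
    assert (Hkey : 0 <= 2 * t * b + K * a).
    { destruct (Rle_lt_dec (-1) y) as [Hy|Hy].
      - destruct (Hg2C y Hy) as [B1 B2]. fold b a in B1, B2.
        assert (HCt : 2 * C * t <= K).
        { destruct Ht as [_ Ht2]. apply Rmult_le_compat_l with (r := 2 * C) in Ht2; [|lra].
          replace (2 * C * (K / (2 * C))) with K in Ht2 by (field; lra). lra. }
        assert (0 <= a * (K - 2 * C * t)) by (apply Rmult_le_pos; lra).
        assert (0 <= t * (C * a + b)) by (apply Rmult_le_pos; lra). nra.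
      - assert (Hb : 0 <= b).
        { unfold b. replace y with (- (- y)) by ring. rewrite Hodd2.
          destruct (Hg2C (- y) ltac:(lra)). lra. }
        assert (0 <= t * b) by (apply Rmult_le_pos; lra).
        assert (0 <= K * a) by (apply Rmult_le_pos; lra). lra. }
    replace (2 * a * (b * / K) * E + a ^ 2 * (E * / t))
      with ((a * E) * (2 * t * b + K * a) * / (K * t)) by (field; split; lra).
    apply Rmult_le_pos. apply Rmult_le_pos; [nra | lra].
    apply Rlt_le, Rinv_0_lt_compat, Rmult_lt_0_compat; lra. }
  pose (F' := fun x => h (- t * ln x) * (- t * / x)).
  assert (DF : forall x, 0 < x -> derivable_pt_lim (fun x => Phi (- t * ln x)) x (F' x)).
  { intros x Hx. unfold F'. apply (D_comp Phi (fun x => - t * ln x)). apply DPhi.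
    apply D_scal, derivable_pt_lim_ln; auto. }
  assert (HF'k : forall x, 0 < x -> F' x = - t * k (- t * ln x)).
  { intros x Hx. unfold F', k. replace (- t * ln x / t) with (- ln x) by (field; auto).
    rewrite exp_Ropp, exp_ln; auto. field. lra. }
  assert (Hkm : forall u v, u <= v -> k u <= k v).
  { intros u v Huv. apply (mono_D k k'); auto. }
  assert (Part1 : convex_on (fun x => 0 < x) (fun x => Phi (- t * ln x))).
  { apply convex_of_D with F'. exact DF.
    intros a b [Ha Hab]. rewrite !HF'k by lra.
    assert (ln a <= ln b) by (apply ln_le; lra).
    assert (k (- t * ln b) <= k (- t * ln a)) by (apply Hkm; nra). nra. }
  split; [exact Part1|].
  assert (Hh0 : forall s, 0 <= h s) by (intro s; unfold h; apply pow2_ge_0).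
  assert (HPm : forall u v, u <= v -> Phi u <= Phi v).
  { intros u v Huv. apply (mono_D Phi h); auto. }
  destruct Hbdd as [M HM].
  assert (Hg0 : g 0 = 0) by (apply Hid; lra).
  assert (Hub : forall x, 0 <= x -> Phi x <= K * M + Phi 0).
  { intros x Hx.
    assert (Q : K * g (0 / K) - Phi 0 <= K * g (x / K) - Phi x).
    { apply (mono_D (fun x => K * g (x / K) - Phi x) (fun x => dphi x - h x)); auto.
      intros; apply D_minus; auto.
      intros c _. rewrite Hdphi'. unfold h. destruct (Hg1pos (c / K)). nra. }
    replace (0 / K) with 0 in Q by (field; auto). rewrite Hg0 in Q.
    assert (g (x / K) <= M) by (pose proof (Rle_abs (g (x / K))); pose proof (HM (x / K)); lra).
    assert (K * g (x / K) <= K * M) by (apply Rmult_le_compat_l; lra). lra. }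
  set (E := fun v => exists x, 0 <= x /\ v = Phi x).
  assert (HEb : bound E).
  { exists (K * M + Phi 0). intros v [x [Hx ->]]. auto. }
  destruct (completeness E HEb (ex_intro _ (Phi 0) (ex_intro _ 0 (conj (Rle_refl 0) eq_refl))))
    as [L [HL1 HL2]].
  assert (HleL : forall x, Phi x <= L).
  { intro x. destruct (Rle_lt_dec 0 x).
    - apply HL1. exists x; auto.
    - apply Rle_trans with (Phi 0). apply HPm; lra. apply HL1; exists 0; split; auto; lra. }
  assert (Htend : tends_to_at_pinfty Phi L).
  { intros eps He.
    destruct (Classical_Prop.classic (exists x0, 0 <= x0 /\ L - eps < Phi x0)) as [[x0 [Hx0 Hp]]|Hn].
    - exists x0. intros s Hs. pose proof (HPm x0 s Hs). pose proof (HleL s).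
      apply Rabs_def1; lra.
    - exfalso. assert (L <= L - eps); [|lra]. apply HL2. intros v [x [Hx ->]].
      destruct (Rle_lt_dec (Phi x) (L - eps)) as [ok|bad]; auto.
      exfalso; apply Hn; exists x; auto. }
  exists L. split; [exact Htend|].
  assert (Fpos : forall u, 0 < u -> F_ext Phi t L u = Phi (- t * ln u)).
  { intros u Hu. unfold F_ext. destruct (Rle_dec u 0); [lra|auto]. }
  assert (Hcont : continuous_on (fun x => 0 <= x) (F_ext Phi t L)).
  { intros x Hx eps He. destruct (Req_dec x 0) as [->|Hx0].
    - destruct (Htend eps He) as [M0 HM0].
      exists (exp (- M0 / t)). split; [apply exp_pos|].
      intros y Hy Hyd. unfold F_ext at 2. destruct (Rle_dec 0 0); [|lra].
      destruct (Req_dec y 0) as [->|Hy0].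
      + unfold F_ext. destruct (Rle_dec 0 0); [|lra]. unfold Rminus; rewrite Rplus_opp_r, Rabs_R0; auto.
      + rewrite Fpos by lra. apply HM0.
        rewrite Rminus_0_r, Rabs_pos_eq in Hyd by lra.
        assert (ln y < - M0 / t) by (rewrite <- (ln_exp (- M0 / t)); apply ln_increasing; lra).
        assert (t * ln y < t * (- M0 / t)) by (apply Rmult_lt_compat_l; lra).
        replace (t * (- M0 / t)) with (- M0) in H0 by (field; auto). lra.
    - assert (Hxp : 0 < x) by lra.
      destruct (cont_eps _ x (D_cont _ _ _ (DF x Hxp)) eps He) as [d [Hd Hdd]].
      exists (Rmin d x). split; [apply Rmin_pos; lra|].
      intros y Hy Hyd. pose proof (Rmin_l d x). pose proof (Rmin_r d x).
      assert (Hyp : 0 < y) by (apply Rabs_def2 in Hyd; lra).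
      rewrite !Fpos by lra. apply Hdd. lra. }
  split; [|exact Hcont].
  apply convex_closure; auto.
  intros x y l Hx Hy Hl.
  assert (Hz : 0 < l * x + (1 - l) * y).
  { destruct (Req_dec l 0) as [->|]. lra.
    assert (0 < l * x) by (apply Rmult_lt_0_compat; lra).
    assert (0 <= (1 - l) * y) by (apply Rmult_le_pos; lra). lra. }
  rewrite !Fpos by lra. apply Part1; auto.
Qed.
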